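(* Let $I\subset\mathbb{R}$ be an interval and let $M,N\colon I^2\to I$ be means. Let $\mathcal{A}_{M,N}$ be the set of all $(x,y)\in I^2$ such that the sequence $\big((M_n,N_n)(x,y)\big)_{n=1}^\infty$ converges to a point of the diagonal $\{(t,t)\colon t\in I\}$. Then $\mathcal{A}_{M,N}$ is a maximal subset of $I^2$ on which all $(M,N)$-invariant means are equal to each other; that is, any two $(M,N)$-invariant means coincide at every point of $\mathcal{A}_{M,N}$, and for every $(x,y)\in I^2\setminus\mathcal{A}_{M,N}$ there exist two $(M,N)$-invariant means taking different values at $(x,y)$.
   Context: A function $K\colon I^2\to\mathbb{R}$ is a mean in $I$ if $\min(x,y)\le K(x,y)\le\max(x,y)$ for all $x,y\in I$. For means $M,N\colon I^2\to I$, $(M_n,N_n):=(M,N)^n$ denotes the $n$-th iterate of the map $(x,y)\mapsto(M(x,y),N(x,y))$. A mean $K\colon I^2\to I$ is $(M,N)$-invariant if $K(M(x,y),N(x,y))=K(x,y)$ for all $x,y\in I$. *)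

(* Defs.v *)
From Stdlib Require Import Reals.
Open Scope R_scope.

Definition is_interval (I : R -> Prop) : Prop :=
  forall a b c, I a -> I c -> a <= b -> b <= c -> I b.

Definition is_mean (I : R -> Prop) (K : R -> R -> R) : Prop :=
  forall x y, I x -> I y ->
    I (K x y) /\ Rmin x y <= K x y /\ K x y <= Rmax x y.

Fixpoint MN_iter (M N : R -> R -> R) (n : nat) (x y : R) : R * R :=
  match n with
  | O => (x, y)
  | S k => let p := MN_iter M N k x y in (M (fst p) (snd p), N (fst p) (snd p))
  end.

Definition invariant_mean (I : R -> Prop) (M N K : R -> R -> R) : Prop :=
  is_mean I K /\
  forall x y, I x -> I y -> K (M x y) (N x y) = K x y.

Definition A_MN (I : R -> Prop) (M N : R -> R -> R) (x y : R) : Prop :=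
  I x /\ I y /\
  exists t, I t /\
    Un_cv (fun n => fst (MN_iter M N (S n) x y)) t /\
    Un_cv (fun n => snd (MN_iter M N (S n) x y)) t.

(* Main.v *)
Require Import Defs.
From Stdlib Require Import Reals Lra FunctionalExtensionality.
From Coquelicot Require Import Coquelicot.
Open Scope R_scope.

Definition lo (M N : R -> R -> R) x y n :=
  Rmin (fst (MN_iter M N n x y)) (snd (MN_iter M N n x y)).
Definition hi (M N : R -> R -> R) x y n :=
  Rmax (fst (MN_iter M N n x y)) (snd (MN_iter M N n x y)).
Definition Klo M N x y := real (Lim_seq (lo M N x y)).
Definition Khi M N x y := real (Lim_seq (hi M N x y)).

Lemma iter_shift M N n x y :
  MN_iter M N n (M x y) (N x y) = MN_iter M N (S n) x y.
Proof.
  induction n as [|n IH]; simpl; [reflexivity|]. rewrite IH. reflexivity.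
Qed.

Lemma iter_in I M N x y (HM : is_mean I M) (HN : is_mean I N) :
  I x -> I y -> forall n, I (fst (MN_iter M N n x y)) /\ I (snd (MN_iter M N n x y)).
Proof.
  intros Hx Hy n; induction n as [|n [H1 H2]]; simpl; auto.
  destruct (HM _ _ H1 H2) as [? _]; destruct (HN _ _ H1 H2) as [? _]; auto.
Qed.

Section S.
Variables (I : R -> Prop) (M N : R -> R -> R).
Hypotheses (HI : is_interval I) (HM : is_mean I M) (HN : is_mean I N).

Lemma mono x y : I x -> I y -> forall n,
  lo M N x y n <= lo M N x y (S n) /\ hi M N x y (S n) <= hi M N x y n
  /\ lo M N x y n <= fst (MN_iter M N n x y) <= hi M N x y n
  /\ lo M N x y n <= snd (MN_iter M N n x y) <= hi M N x y n.
Proof.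
  intros Hx Hy n. destruct (iter_in I M N x y HM HN Hx Hy n) as [H1 H2].
  unfold lo, hi; simpl.
  destruct (HM _ _ H1 H2) as [_ [A B]]; destruct (HN _ _ H1 H2) as [_ [C D]].
  set (a := fst (MN_iter M N n x y)) in *. set (b := snd (MN_iter M N n x y)) in *.
  pose proof (Rmin_l a b); pose proof (Rmin_r a b); pose proof (Rmax_l a b); pose proof (Rmax_r a b).
  repeat split; try lra.
  - apply Rmin_glb; lra.
  - apply Rmax_lub; lra.
Qed.

Lemma lohi x y : I x -> I y -> forall n,
  lo M N x y 0 <= lo M N x y n /\ lo M N x y n <= hi M N x y n /\ hi M N x y n <= hi M N x y 0.
Proof.
  intros Hx Hy n; induction n as [|n IH].
  - pose proof (mono x y Hx Hy 0); lra.
  - pose proof (mono x y Hx Hy n); pose proof (mono x y Hx Hy (S n)); lra.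
Qed.

Lemma lim_lo x y : I x -> I y -> is_lim_seq (lo M N x y) (Klo M N x y).
Proof.
  intros Hx Hy. unfold Klo. apply Lim_seq_correct'.
  apply ex_finite_lim_seq_incr with (hi M N x y 0).
  - intro n; apply (mono x y Hx Hy n).
  - intro n; pose proof (lohi x y Hx Hy n); lra.
Qed.

Lemma lim_hi x y : I x -> I y -> is_lim_seq (hi M N x y) (Khi M N x y).
Proof.
  intros Hx Hy. unfold Khi. apply Lim_seq_correct'.
  apply ex_finite_lim_seq_decr with (lo M N x y 0).
  - intro n; apply (mono x y Hx Hy n).
  - intro n; pose proof (lohi x y Hx Hy n); lra.
Qed.

Lemma bounds x y : I x -> I y ->
  lo M N x y 0 <= Klo M N x y /\ Klo M N x y <= Khi M N x y /\ Khi M N x y <= hi M N x y 0.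
Proof.
  intros Hx Hy.
  pose proof (lim_lo x y Hx Hy) as L1; pose proof (lim_hi x y Hx Hy) as L2.
  repeat split.
  - pose proof (is_lim_seq_le _ _ _ _ (fun n => proj1 (lohi x y Hx Hy n)) (is_lim_seq_const _) L1) as H; exact H.
  - pose proof (is_lim_seq_le _ _ _ _ (fun n => proj1 (proj2 (lohi x y Hx Hy n))) L1 L2) as H; exact H.
  - pose proof (is_lim_seq_le _ _ _ _ (fun n => proj2 (proj2 (lohi x y Hx Hy n))) L2 (is_lim_seq_const _)) as H; exact H.
Qed.

Lemma mean_of (K : R -> R -> R) :
  (forall x y, I x -> I y -> lo M N x y 0 <= K x y <= hi M N x y 0) -> is_mean I K.
Proof.
  intros H x y Hx Hy. specialize (H x y Hx Hy). unfold lo, hi in H; simpl in H.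
  split; [|lra].
  destruct (Rle_dec x y).
  - rewrite Rmin_left, Rmax_right in H by lra. apply (HI x _ y); tauto.
  - rewrite Rmin_right, Rmax_left in H by lra. apply (HI y _ x); tauto.
Qed.

Lemma inv_lo : invariant_mean I M N (Klo M N).
Proof.
  split.
  - apply mean_of; intros x y Hx Hy; pose proof (bounds x y Hx Hy); lra.
  - intros x y _ _. unfold Klo.
    replace (lo M N (M x y) (N x y)) with (fun n => lo M N x y (S n)).
    + rewrite Lim_seq_incr_1; reflexivity.
    + apply functional_extensionality; intro n; unfold lo; rewrite iter_shift; reflexivity.
Qed.

Lemma inv_hi : invariant_mean I M N (Khi M N).
Proof.
  split.
  - apply mean_of; intros x y Hx Hy; pose proof (bounds x y Hx Hy); lra.
  - intros x y _ _. unfold Khi.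
    replace (hi M N (M x y) (N x y)) with (fun n => hi M N x y (S n)).
    + rewrite Lim_seq_incr_1; reflexivity.
    + apply functional_extensionality; intro n; unfold hi; rewrite iter_shift; reflexivity.
Qed.

Lemma K_const K : invariant_mean I M N K -> forall x y, I x -> I y -> forall n,
  K x y = K (fst (MN_iter M N n x y)) (snd (MN_iter M N n x y)).
Proof.
  intros [_ HK] x y Hx Hy n; induction n as [|n IH]; simpl; auto.
  destruct (iter_in I M N x y HM HN Hx Hy n) as [H1 H2].
  rewrite HK; auto.
Qed.

Lemma K_at_A K : invariant_mean I M N K -> forall x y t, I x -> I y ->
  Un_cv (fun n => fst (MN_iter M N (S n) x y)) t ->
  Un_cv (fun n => snd (MN_iter M N (S n) x y)) t -> K x y = t.
Proof.
  intros HK x y t Hx Hy C1 C2.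
  destruct (Req_dec (K x y) t) as [|Hne]; auto. exfalso.
  set (e := Rabs (K x y - t) / 2).
  assert (He : e > 0) by (unfold e; pose proof (Rabs_pos_lt _ (Rminus_eq_contra _ _ Hne)); lra).
  destruct (C1 e He) as [N1 HN1]; destruct (C2 e He) as [N2 HN2].
  specialize (HN1 (max N1 N2) (Nat.le_max_l _ _)); specialize (HN2 (max N1 N2) (Nat.le_max_r _ _)).
  unfold R_dist in *.
  pose proof (K_const K HK x y Hx Hy (S (max N1 N2))) as Ek.
  destruct (iter_in I M N x y HM HN Hx Hy (S (max N1 N2))) as [H1 H2].
  destruct (proj1 HK _ _ H1 H2) as [_ [B1 B2]].
  rewrite <- Ek in B1, B2.
  set (a := fst (MN_iter M N (S (max N1 N2)) x y)) in *.
  set (b := snd (MN_iter M N (S (max N1 N2)) x y)) in *.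
  apply Rabs_def2 in HN1; apply Rabs_def2 in HN2.
  assert (Rabs (K x y - t) < e).
  { unfold Rmin, Rmax in *; destruct (Rle_dec a b); apply Rabs_def1; lra. }
  unfold e in *; lra.
Qed.

End S.

Theorem mainTheorem3 (I : R -> Prop) (M N : R -> R -> R)
  (HI : is_interval I) (HM : is_mean I M) (HN : is_mean I N) :
  (forall K1 K2 : R -> R -> R,
     invariant_mean I M N K1 -> invariant_mean I M N K2 ->
     forall x y, A_MN I M N x y -> K1 x y = K2 x y)
  /\
  (forall x y, I x -> I y -> ~ A_MN I M N x y ->
     exists K1 K2 : R -> R -> R,
       invariant_mean I M N K1 /\ invariant_mean I M N K2 /\ K1 x y <> K2 x y).
Proof.
  split.
  - intros K1 K2 H1 H2 x y [Hx [Hy [t [_ [C1 C2]]]]].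
    rewrite (K_at_A I M N HM HN K1 H1 x y t Hx Hy C1 C2).
    rewrite (K_at_A I M N HM HN K2 H2 x y t Hx Hy C1 C2). reflexivity.
  - intros x y Hx Hy HA.
    exists (Klo M N), (Khi M N).
    split; [apply inv_lo; auto|]. split; [apply inv_hi; auto|].
    intro Heq. apply HA. split; [auto|split; [auto|]].
    exists (Klo M N x y). split.
    + destruct (inv_lo I M N HI HM HN) as [Hm _]. apply (Hm x y Hx Hy).
    + pose proof (lim_lo I M N HM HN x y Hx Hy) as L1.
      pose proof (lim_hi I M N HM HN x y Hx Hy) as L2. rewrite <- Heq in L2.
      split; apply is_lim_seq_Reals; apply (is_lim_seq_incr_1 (fun n => _ (MN_iter M N n x y)));
        apply is_lim_seq_le_le with (lo M N x y) (hi M N x y); auto;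
        intro n; apply (mono I M N HM HN x y Hx Hy n).
Qed.
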